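(* Let $r\ge1$ and $t,s\ge0$ be integers. For every $\mathbf{u}=(u_1,\dots,u_r)\in\mathbb{Z}_+^r$ with $u_i\ge s+1$ for all $i\in\{1,\dots,r\}$, we have $|\mathcal{A}_{t,s}(\mathbf{u})|=A_{t,s}(r)$.
   Context: For $\mathbf{u}\in\mathbb{Z}_+^r$ (positive integers), $\mathcal{A}_{t,s}(\mathbf{u})=\{\mathbf{v}\in\mathbb{Z}_+^r:\ \sum_{i=1}^r\max\{0,u_i-v_i\}\le s,\ \sum_{i=1}^r\max\{0,v_i-u_i\}\le t\}$. The numbers $A_{t,s}(r)$ (integers $t,s$, $r\ge1$) are defined by: $A_{t,s}(r)=0$ if $t<0$ or $s<0$; $A_{t,s}(1)=t+s+1$ for $t,s\ge0$; for $r\ge2$, $t,s\ge0$: $A_{t,s}(r)=\sum_{i=1}^{t}A_{t-i,s}(r-1)+\sum_{i=1}^{s}A_{t,s-i}(r-1)+A_{t,s}(r-1)$. *)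

(* Defs.v *)
From mathcomp Require Import all_boot.
Set Implicit Arguments. Unset Strict Implicit. Unset Printing Implicit Defensive.

(* Vectors in Z_+^r are r-tuples of nats with all entries >= 1. *)
Definition posvec (r : nat) (v : r.-tuple nat) : bool := all (fun x => 0 < x) v.

Definition inA (r t s : nat) (u v : r.-tuple nat) : bool :=
  [&& posvec v,
      (\sum_(i < r) (tnth u i - tnth v i)) <= s &
      (\sum_(i < r) (tnth v i - tnth u i)) <= t].

(* The numbers A_{t,s}(r) for t,s >= 0 (negative arguments never arise,
   since the recursion only uses t-i, s-i with 1 <= i <= t resp. s).
   Anum t s r is specified for r >= 1; Anum t s 0 is an unused value. *)
Fixpoint Anum (t s r : nat) {struct r} : nat :=
  match r with
  | 0 => 0
  | 1 => t + s + 1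
  | r'.+1 => \sum_(1 <= i < t.+1) Anum (t - i) s r'
             + \sum_(1 <= i < s.+1) Anum t (s - i) r'
             + Anum t s r'
  end.

Definition has_card (T : eqType) (X : T -> bool) (n : nat) : Prop :=
  exists l : seq T, [/\ uniq l, forall x, (x \in l) = X x & size l = n].

(* Main.v *)
Require Import Defs.
From mathcomp Require Import all_boot zify.

Fixpoint L (u : seq nat) (t s : nat) : seq (seq nat) :=
  match u with
  | [::] => [:: [::]]
  | x :: u' => [seq (x - s + k) :: w | k <- iota 0 (s + t + 1),
                                        w <- L u' (t - (k - s)) (s - (s - k))]
  end.

Fixpoint C (n t s : nat) : nat :=
  match n with
  | 0 => 1
  | n'.+1 => sumn [seq C n' (t - (k - s)) (s - (s - k)) | k <- iota 0 (s + t + 1)]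
  end.

Lemma size_L u t s : size (L u t s) = C (size u) t s.
Proof.
elim: u t s => [|x u IH] t s //=.
rewrite size_allpairs_dep; congr sumn; apply: eq_map => k; exact: IH.
Qed.

Lemma uniq_L u t s : uniq (L u t s).
Proof.
elim: u t s => [|x u IH] t s //=.
apply: allpairs_uniq_dep; first exact: iota_uniq.
  by move=> k _; exact: IH.
move=> [k1 w1] [k2 w2] _ _ /= [e1 e2].
have ek : k1 = k2 by lia.
by subst k2 w2.
Qed.

Lemma C_rec n t s :
  C n.+1 t s = \sum_(1 <= i < t.+1) C n (t - i) s
             + \sum_(1 <= i < s.+1) C n t (s - i) + C n t s.
Proof.
rewrite /= -addnA iotaD map_cat sumn_cat add0n addn1 /= subnn subn0.
have E3 : sumn [seq C n (t - (k - s)) (s - (s - k)) | k <- iota s.+1 t] = \sum_(1 <= i < t.+1) C n (t - i) s.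
  rewrite -addn1 iotaDl -map_comp sumnE big_map /index_iota subSS subn0.
  apply: eq_bigr => i _ /=; congr (C n _ _); lia.
have E1 : sumn [seq C n (t - (k - s)) (s - (s - k)) | k <- iota 0 s] = \sum_(1 <= i < s.+1) C n t (s - i).
  rewrite sumnE big_map.
  rewrite big_nat_rev big_add1 /=.
  rewrite /index_iota subn0.
  apply: eq_big_seq => k; rewrite mem_iota => /andP [_ Hk].
  congr (C n _ _); lia.
rewrite subn0 E1 E3; lia.
Qed.

Lemma Anum_C t s n : 1 <= n -> Anum t s n = C n t s.
Proof.
elim: n t s => [|n IH] t s // _.
case: n IH => [|n] IH.
  rewrite C_rec /= !sum_nat_const_nat; lia.
rewrite C_rec [LHS]/=.
congr (_ + _ + _); first (apply: eq_bigr => i _); try (apply: eq_bigr => i _); exact: IH.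
Qed.

Lemma mem_L u t s w : all (fun x => s < x) u ->
  (w \in L u t s) = [&& size w == size u, all (fun x => 0 < x) w,
     \sum_(0 <= i < size u) (nth 0 u i - nth 0 w i) <= s &
     \sum_(0 <= i < size u) (nth 0 w i - nth 0 u i) <= t].
Proof.
elim: u t s w => [|x u IH] t s w.
  by case: w => [|y w] _; rewrite ?big_nil ?andbT //= inE.
move=> /= /andP [hx hu].
case: w => [|y w].
  apply/allpairsPdep => -[k [w' [_ _ //]]].
rewrite /= !big_nat_recl //= eqSS.
apply/allpairsPdep/idP.
- move=> [k [w' [hk hw' [e1 e2]]]]; subst y w'.
  move: hk; rewrite mem_iota => /andP [_ hk].
  rewrite IH in hw'; last by apply: sub_all hu => z /=; lia.
  move/and4P: hw' => [-> -> h1 h2] /=.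
  apply/andP; split; first lia.
  apply/andP; split; lia.
- move/and4P=> [hs /andP [hy hw] h1 h2].
  exists (y - (x - s)), w; split.
  + rewrite mem_iota; lia.
  + rewrite IH; last by apply: sub_all hu => z /=; lia.
    rewrite hs hw /=; apply/andP; split; lia.
  + congr (_ :: _); lia.
Qed.

Theorem lemma2 (r t s : nat) (u : r.-tuple nat) :
  1 <= r -> posvec u -> (forall i : 'I_r, s.+1 <= tnth u i) ->
  has_card (inA t s u) (Anum t s r).
Proof.
move=> hr _ hu.
have hall : all (fun x => s < x) u.
  apply/(all_nthP 0) => i; rewrite size_tuple => hi.
  by have := hu (Ordinal hi); rewrite (tnth_nth 0).
exists (pmap insub (L u t s)); split.
- exact: pmap_sub_uniq (uniq_L _ _ _).
- move=> v; rewrite mem_pmap_sub mem_L // /inA /posvec !size_tuple eqxx /=.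
  congr [&& _, _ <= s & _ <= t].
  + rewrite big_mkord; apply: eq_bigr => i _; by rewrite !(tnth_nth 0).
  + rewrite big_mkord; apply: eq_bigr => i _; by rewrite !(tnth_nth 0).
- rewrite size_pmap_sub (Anum_C t s r hr).
  have -> : count (fun x : seq nat => size x == r) (L u t s) = size (L u t s).
    rewrite -count_predT; apply: eq_in_count => w.
    by rewrite mem_L // => /andP [/eqP -> _]; rewrite size_tuple eqxx.
  by rewrite size_L size_tuple.
Qed.
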